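(* Let $n\geq 1$ and $k\geq 1$ be integers and $d_1,\dots,d_k$ positive integers with $\sum_{i=1}^k d_i=n+1$. For $0\leq j\leq n$, let $S_j(n;d_1,\dots,d_k)$ denote the coefficient of $t^{n-j}$ in $n!\,F_n(t;d_1,\dots,d_k)$. Then $$S_j(n;d_1,\dots,d_k)=\begin{cases}2S_j(n;d_1,\dots,d_{k-1}) & \text{if } k+j \text{ is even},\\ 0 & \text{if } k+j\text{ is odd}.\end{cases}$$
   Context: For an integer $m>0$, $\binom{t}{m}=\frac{1}{m!}\prod_{i=0}^{m-1}(t-i)$. For $I\subset\{1,\dots,k\}$, $d_I=\sum_{i\in I}d_i$ (with $d_\emptyset=0$). For integers $m>0$, $k\geq 0$ and positive integers $d_1,\dots,d_k$, define $F_m(t;d_1,\dots,d_k)=\sum_{I\subset\{1,\dots,k\}}(-1)^{|I|}\binom{t+m-d_I}{m}$; its degree in $t$ is at most $m$. $S_j(n;d_1,\dots,d_{k-1})$ is defined analogously as the coefficient of $t^{n-j}$ in $n!\,F_n(t;d_1,\dots,d_{k-1})$. *)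

(* Defs.v *)
From mathcomp Require Import all_boot all_order all_algebra.
Set Implicit Arguments. Unset Strict Implicit. Unset Printing Implicit Defensive.
Import GRing.Theory Num.Theory.
Local Open Scope ring_scope.

Definition binomP (c : int) (m : nat) : {poly rat} :=
  (m`!%:R)^-1 *: \prod_(i < m) ('X + (c - i%:Z)%:~R%:P).

(* d_I for I a subset of the indices of the sequence d (0-indexed). *)
Definition dI (d : seq nat) (I : {set 'I_(size d)}) : nat :=
  (\sum_(i in I) nth 0 d i)%N.

Definition Fpoly (m : nat) (d : seq nat) : {poly rat} :=
  \sum_(I : {set 'I_(size d)}) (-1) ^+ #|I| * binomP (m%:Z - (dI I)%:Z) m.

Definition Scoef (j n : nat) (d : seq nat) : rat :=
  (n`!%:R *: Fpoly n d)`_(n - j).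

(* Main.v *)
Require Import Defs.
From mathcomp Require Import all_boot all_order all_algebra.
From mathcomp Require Import zify ring.
Import GRing.Theory Num.Theory.
Local Open Scope ring_scope.

Definition G (n : nat) (c : int) : {poly rat} :=
  \prod_(i < n) ('X + (c - i%:Z)%:~R%:P).

Lemma prodN n (F : 'I_n -> {poly rat}) :
  \prod_(i<n) - F i = (-1)^+n * \prod_(i<n) F i.
Proof.
elim: n F => [|n IH] F; first by rewrite !big_ord0 mulr1.
rewrite !big_ord_recr IH /= exprSr; ring.
Qed.

Lemma G_refl n c : G n c \Po (- 'X) = (-1)^+n * G n (n%:Z - 1 - c).
Proof.
rewrite /G rmorph_prod /=.
under eq_bigr => i _ do rewrite comp_polyD comp_polyX comp_polyC.
transitivity (\prod_(i < n) - ('X + ((n%:Z - 1 - c) - (rev_ord i : nat)%:Z)%:~R%:P) : {poly rat}).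
  apply: eq_bigr => i _; rewrite opprD -polyCN -rmorphN /=.
  congr (_ + _%:P); congr (_%:~R).
  move: (ltn_ord i) => Hi; rewrite /=. lia.
rewrite prodN; congr (_ * _).
rewrite [RHS](reindex_inj rev_ord_inj) /=. done.
Qed.

Lemma coefNX (p : {poly rat}) m : (p \Po - 'X)`_m = (-1)^+m * p`_m.
Proof.
elim/poly_ind: p m => [|p c IH] m; first by rewrite comp_poly0 !coef0 mulr0.
rewrite comp_polyD comp_polyC comp_polyM comp_polyX !coefD !coefC mulrN coefN !coefMX.
case: m => [|m] /=; first by rewrite oppr0 !add0r expr0 mul1r.
by rewrite IH exprS !addr0 mulN1r mulNr.
Qed.

Definition hset {m} (J : {set 'I_m}) (b : bool) : {set 'I_m.+1} :=
  [set i | if unlift ord_max i is Some j then j \in J else b].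

Lemma hset_sum m (J : {set 'I_m}) b (w : nat -> nat) :
  (\sum_(i in hset J b) w i = \sum_(i in J) w i + (if b then w m else 0))%N.
Proof.
rewrite big_mkcond big_ord_recr /= [in RHS]big_mkcond /=; congr addn.
  apply: eq_bigr => i _.
  have -> : widen_ord (leqnSn m) i = lift ord_max i by apply: val_inj; rewrite /= /bump leqNgt ltn_ord.
  by rewrite inE liftK.
by rewrite inE unlift_none; case: b.
Qed.

Lemma hset_card m (J : {set 'I_m}) b : #|hset J b| = (#|J| + b)%N.
Proof.
rewrite -sum1_card (@hset_sum _ J b (fun _ => 1%N)) sum1_card; by case: b.
Qed.

Definition Sig (m : nat) (w : nat -> nat) (F : nat -> nat -> {poly rat}) : {poly rat} :=
  \sum_(I : {set 'I_m}) F #|I| (\sum_(i in I) w i)%N.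

Lemma Sig_S m w F : Sig m.+1 w F =
  \sum_(J : {set 'I_m}) (F #|J| (\sum_(i in J) w i)%N + F #|J|.+1 (\sum_(i in J) w i + w m)%N).
Proof.
rewrite /Sig (reindex (fun p : {set 'I_m} * bool => hset p.1 p.2)) /=.
  rewrite -(pair_bigA _ (fun J b => F #|hset J b| (\sum_(i in hset J b) w i)%N)) /=; apply: eq_bigr => J _.
  rewrite big_bool /= addrC !hset_card !hset_sum addn0 addn1.
  by rewrite addn0.
apply: onW_bij.
exists (fun I : {set 'I_m.+1} => ([set j : 'I_m | lift ord_max j \in I], ord_max \in I)).
  move=> [J b] /=; congr pair.
    by apply/setP => j; rewrite !inE liftK.
  by rewrite inE unlift_none.
move=> I; apply/setP => i /=; rewrite inE; case: unliftP => [j ->|->]; by rewrite ?inE.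
Qed.

Lemma Q_Sig n d : n`!%:R *: Fpoly n d =
  Sig (size d) (nth 0%N d) (fun a s => (-1)^+a * G n (n%:Z - s%:Z)).
Proof.
rewrite /Fpoly scaler_sumr; apply: eq_bigr => I _.
rewrite scalerAr /binomP scalerA mulfV ?scale1r //.
by rewrite pnatr_eq0 -lt0n fact_gt0.
Qed.

Lemma signE (a b : nat) : odd a = odd b -> (-1)^+a = (-1)^+b :> {poly rat}.
Proof. by move=> h; rewrite -signr_odd h signr_odd. Qed.

Lemma odd2 a b c : (b = a + c * 2)%N -> odd a = odd b.
Proof. by move=> ->; rewrite oddD oddM andbF addbF. Qed.

Theorem lemma3p5 (n k : nat) (d : seq nat) :
  (1 <= n)%N -> (1 <= k)%N -> size d = k -> all (fun x => 0 < x)%N d ->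
  sumn d = n.+1 ->
  forall j : nat, (j <= n)%N ->
    Scoef j n d = (if odd (k + j) then 0 else 2 * Scoef j n (take k.-1 d)).
Proof.
move=> n1 k1 Hsz Hpos Hsum j Hj.
move: Hsz Hsum k1 Hpos; case/lastP: d => [|d' x]; first by move=> <-.
rewrite size_rcons => <- Hsum _ _ /=.
have -> : take (size d') (rcons d' x) = d' by rewrite -cats1 take_size_cat.
have Hsum' : (sumn d' + x = n.+1)%N by rewrite -Hsum -cats1 sumn_cat /= addn0.
rewrite /Scoef !Q_Sig size_rcons Sig_S.
set m := size d'.
set F := (fun a s : nat => (-1) ^+ a * G n (n%:Z - s%:Z)).
have Hw J : (\sum_(i in J) nth 0 (rcons d' x) (@nat_of_ord m i) = \sum_(i in J) nth 0 d' i)%N.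
  by apply: eq_bigr => i _; rewrite nth_rcons ltn_ord.
have Hx : nth 0 (rcons d' x) m = x by rewrite nth_rcons ltnn eqxx.
under eq_bigr => J _ do rewrite Hw Hx.
rewrite big_split /=.
have key : \sum_(J : {set 'I_m}) F #|J|.+1 (\sum_(i in J) nth 0 d' i + x)%N =
  (-1)^+(n + m.+1) * (Sig m (nth 0%N d') F \Po - 'X).
  rewrite /Sig rmorph_sum mulr_sumr (reindex_inj (@setC_inj _)) /=.
  apply: eq_bigr => J _.
  have HS : (\sum_(i in ~: J) nth 0 d' i + \sum_(i in J) nth 0 d' i = sumn d')%N.
    rewrite sumnE (big_nth 0) big_mkord [RHS](bigID (mem J)) /= addnC; congr addn.
    by apply: eq_bigl => i; rewrite inE.
  have HC : (#|~: J| + #|J| = m)%N by rewrite addnC cardsC card_ord.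
  rewrite /F rmorphM /= rmorphXn rmorphN rmorph1 G_refl.
  rewrite !mulrA -!exprD.
  congr (_ * G n _).
    clearbody m; apply: signE; apply: (@odd2 _ _ (#|J| + n)); move: HC; move: #|~: J| #|J| => a b HC; lia.
  move: HS Hsum'; set s1 := (\sum_(i in ~: J) _)%N; set s2 := (\sum_(i in J) _)%N; clearbody s1 s2; lia.
rewrite [X in X + _](_ : _ = Sig m (nth 0%N d') F) // key coefD.
rewrite -signr_odd; case Ho: (odd (n + m.+1));
  rewrite ?expr0 ?expr1 ?mul1r ?mulN1r ?coefN coefNX -signr_odd oddB //;
  move: Ho; rewrite !oddD /=; case: (odd n); case: (odd j); case: (odd m) => //= _;
  rewrite ?expr0 ?expr1; ring.
Qed.
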